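(* Let $a,c>0$ and $b,d<0$ be real numbers with $x_A=x_B$, and let $W_0(z)=1$, $W_1(z)=z$, $W_n(z)=(az+b)W_{n-1}(z)+(cz+d)W_{n-2}(z)$ for $n\ge2$. Then for every $n\ge0$ the function $U_n(z)=W_n(z)/A(z)^{\lfloor n/2\rfloor}$ is a polynomial (of degree $\lceil n/2\rceil$), all of whose zeros are real and lie in the open interval $(u,x_B)$. Moreover, this interval is sharp: both $u$ and $x_B$ are limits of zeros of the polynomials $U_n(z)$.
   Context: Notation: $A(z)=az+b$, $B(z)=cz+d$, $x_A=-b/a$, $x_B=-d/c$, $\Delta_\Delta=c^2-a^2B(x_A)$, $x_\Delta^\pm=x_A+\frac{-2c\pm2\sqrt{\Delta_\Delta}}{a^2}$, $g(z)=(1-a)z^2-(b+c)z-d$, $\Delta_g=(b+c)^2+4d(1-a)$, $F=\Delta_g-\Delta_\Delta=d(a-2)^2+bc(2-a)+b^2$. The zeros of $g$ are $x_g^\pm=\frac{b+c}{2(1-a)}\pm\frac{\sqrt{\Delta_g}}{2|1-a|}$ if $a\neq1$, and $x_g^\pm=-d/(b+c)$ if $a=1$ and $b+c\ne0$. Define $u=x_\Delta^-$ if $a<2$ and $F\le0$; $u=x_g^+$ if $a<1$ and $F>0$; $u=x_g^-$ otherwise. A number $z^*$ is a limit of zeros of $\{U_n\}$ if there exist zeros $z_n$ of $U_n$ with $z_n\to z^*$. *)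

(* Defs.v *)
From Stdlib Require Import Reals Lra List.
Import ListNotations.
Open Scope R_scope.

Record Cx := mkC { re : R; im : R }.
Definition C0 : Cx := mkC 0 0.
Definition Cadd (z w : Cx) : Cx := mkC (re z + re w) (im z + im w).
Definition Cmul (z w : Cx) : Cx :=
  mkC (re z * re w - im z * im w) (re z * im w + im z * re w).
Definition Cmod (z : Cx) : R := sqrt (re z ^ 2 + im z ^ 2).
Definition Cdist (z w : Cx) : R := Cmod (mkC (re z - re w) (im z - im w)).

(** * Polynomials with real coefficients as coefficient lists [p0; p1; ...] *)
Definition reval (p : list R) (x : R) : R :=
  fold_right (fun coef acc => coef + x * acc) 0 p.
Definition ceval (p : list R) (z : Cx) : Cx :=
  fold_right (fun coef acc => Cadd (mkC coef 0) (Cmul z acc)) C0 p.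
Definition has_degree (p : list R) (m : nat) : Prop :=
  length p = S m /\ nth m p 0 <> 0.

Definition Af (a b z : R) : R := a * z + b.
Definition Bf (c d z : R) : R := c * z + d.
Definition xA (a b : R) : R := - b / a.
Definition xB (c d : R) : R := - d / c.

Fixpoint W (a b c d : R) (n : nat) (z : R) : R :=
  match n with
  | O => 1
  | S O => z
  | S ((S m) as k) => Af a b z * W a b c d k z + Bf c d z * W a b c d m z
  end.

Definition U_poly (a b c d : R) (n : nat) (p : list R) : Prop :=
  forall z : R, Af a b z <> 0 ->
    W a b c d n z / (Af a b z) ^ (Nat.div2 n) = reval p z.

Definition zero_of_U (a b c d : R) (n : nat) (z : Cx) : Prop :=
  exists p, U_poly a b c d n p /\ ceval p z = C0.

Definition limit_of_zeros (a b c d : R) (zs : R) : Prop :=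
  exists (N : nat) (zn : nat -> Cx),
    (forall n, (N <= n)%nat -> zero_of_U a b c d n (zn n)) /\
    (forall eps, 0 < eps -> exists M : nat, forall n, (M <= n)%nat ->
        Cdist (zn n) (mkC zs 0) < eps).

Definition DeltaDelta (a b c d : R) : R := c ^ 2 - a ^ 2 * Bf c d (xA a b).
Definition xDelta_minus (a b c d : R) : R :=
  xA a b + (- 2 * c - 2 * sqrt (DeltaDelta a b c d)) / a ^ 2.
Definition Deltag (a b c d : R) : R := (b + c) ^ 2 + 4 * d * (1 - a).
Definition Ff (a b c d : R) : R := d * (a - 2) ^ 2 + b * c * (2 - a) + b ^ 2.
Definition xg_plus (a b c d : R) : R :=
  if Req_EM_T a 1 then - d / (b + c)
  else (b + c) / (2 * (1 - a)) + sqrt (Deltag a b c d) / (2 * Rabs (1 - a)).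
Definition xg_minus (a b c d : R) : R :=
  if Req_EM_T a 1 then - d / (b + c)
  else (b + c) / (2 * (1 - a)) - sqrt (Deltag a b c d) / (2 * Rabs (1 - a)).
Definition u (a b c d : R) : R :=
  if Rlt_dec a 2 then
    if Rle_dec (Ff a b c d) 0 then xDelta_minus a b c d
    else if Rlt_dec a 1 then xg_plus a b c d else xg_minus a b c d
  else xg_minus a b c d.

(* Main.v *)
Require Import Defs.
From Stdlib Require Import Reals List.
From Stdlib Require Import Lra Lia Psatz ClassicalEpsilon.
Import ListNotations.
Open Scope R_scope.

Fixpoint padd (p q : list R) : list R :=
  match p, q with
  | [], _ => q
  | _, [] => p
  | x :: p', y :: q' => (x + y) :: padd p' q'
  end.
Definition pscal (k : R) (p : list R) : list R := map (Rmult k) p.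

Lemma reval_nil x : reval [] x = 0.
Proof. reflexivity. Qed.
Lemma reval_cons c p x : reval (c :: p) x = c + x * reval p x.
Proof. reflexivity. Qed.

Lemma reval_padd p q x : reval (padd p q) x = reval p x + reval q x.
Proof.
  revert q; induction p as [|c p IH]; intros q; simpl.
  - lra.
  - destruct q as [|e q]; simpl. lra. rewrite IH. ring.
Qed.
Lemma reval_pscal k p x : reval (pscal k p) x = k * reval p x.
Proof. induction p as [|c p IH]; simpl. ring. unfold pscal in *; simpl; rewrite IH; ring. Qed.

Lemma length_padd p q : length (padd p q) = Nat.max (length p) (length q).
Proof.
  revert q; induction p as [|c p IH]; intros q; simpl. reflexivity.
  destruct q; simpl. reflexivity. rewrite IH. reflexivity.
Qed.
Lemma nth_padd p q i : nth i (padd p q) 0 = nth i p 0 + nth i q 0.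
Proof.
  revert q i; induction p as [|c p IH]; intros q i; simpl.
  - destruct i; simpl; ring.
  - destruct q as [|e q]; destruct i; simpl; try ring. apply IH.
Qed.
Lemma length_pscal k p : length (pscal k p) = length p.
Proof. apply length_map. Qed.
Lemma nth_pscal k p i : nth i (pscal k p) 0 = k * nth i p 0.
Proof.
  revert i; induction p as [|c p IH]; intros i; destruct i; simpl; try ring; auto.
Qed.

Lemma reval_cont p : continuity (fun x => reval p x).
Proof.
  induction p as [|c p IH]; simpl.
  - apply continuity_const. intros x y; reflexivity.
  - apply (continuity_plus (fun _ => c) (fun x => x * reval p x)).
    apply continuity_const. intros x y; reflexivity.
    apply (continuity_mult (fun x => x) (fun x => reval p x)); auto.
    apply derivable_continuous, derivable_id.
Qed.

Fixpoint quot (p : list R) (x : R) : list R :=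
  match p with
  | [] => []
  | c0 :: p' => match p' with [] => [] | _ => reval p' x :: quot p' x end
  end.

Lemma quot_spec p x y : reval p y = (y - x) * reval (quot p x) y + reval p x.
Proof.
  induction p as [|c0 p IH]; simpl. ring.
  destruct p as [|c1 p'].
  - simpl. ring.
  - change (quot (c0 :: c1 :: p') x) with (reval (c1::p') x :: quot (c1::p') x).
    rewrite !reval_cons. rewrite !reval_cons in IH. rewrite IH. ring.
Qed.

Lemma Cx_eq z w : re z = re w -> im z = im w -> z = w.
Proof. destruct z, w; simpl; intros; subst; reflexivity. Qed.

Lemma ceval_cons c p w : ceval (c :: p) w = Cadd (mkC c 0) (Cmul w (ceval p w)).
Proof. reflexivity. Qed.

Lemma quot_cspec p x w :
  ceval p w = Cadd (Cmul (mkC (re w - x) (im w)) (ceval (quot p x) w)) (mkC (reval p x) 0).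
Proof.
  induction p as [|c0 p IH].
  - apply Cx_eq; simpl; ring.
  - destruct p as [|c1 p'].
    + apply Cx_eq; simpl; ring.
    + rewrite ceval_cons, IH. change (quot (c0 :: c1 :: p') x) with (reval (c1::p') x :: quot (c1::p') x).
      rewrite ceval_cons. rewrite (reval_cons c0).
      apply Cx_eq; simpl; ring.
Qed.

Lemma length_quot p x : length (quot p x) = pred (length p).
Proof.
  induction p as [|c0 p IH]; simpl. reflexivity.
  destruct p as [|c1 p']. reflexivity.
  change (quot (c0 :: c1 :: p') x) with (reval (c1::p') x :: quot (c1::p') x).
  simpl. simpl in IH. rewrite IH. reflexivity.
Qed.

Lemma nth_quot p x k : length p = S (S k) -> nth k (quot p x) 0 = nth (S k) p 0.
Proof.
  revert k; induction p as [|c0 p IH]; intros k Hl. discriminate.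
  destruct p as [|c1 p']. discriminate.
  change (quot (c0 :: c1 :: p') x) with (reval (c1::p') x :: quot (c1::p') x).
  destruct k.
  - simpl in Hl. destruct p'; [|discriminate]. simpl. ring.
  - simpl. apply IH. simpl in *. lia.
Qed.

Fixpoint prodf (z : nat -> R) (k : nat) (x : R) : R :=
  match k with O => 1 | S k' => prodf z k' x * (x - z k') end.

Lemma has_degree_quot p m x : has_degree p (S m) -> has_degree (quot p x) m /\ nth m (quot p x) 0 = nth (S m) p 0.
Proof.
  intros [Hl Hn]. assert (nth m (quot p x) 0 = nth (S m) p 0) by (apply nth_quot; auto).
  split; [split|]; auto. rewrite length_quot, Hl. reflexivity. rewrite H; auto.
Qed.

Lemma factor_real : forall m p z,
  has_degree p m ->
  (forall i j, (i < m)%nat -> (j < m)%nat -> i <> j -> z i <> z j) ->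
  (forall i, (i < m)%nat -> reval p (z i) = 0) ->
  forall x, reval p x = nth m p 0 * prodf z m x.
Proof.
  induction m as [|m IH]; intros p z Hd Hz Hr x.
  - destruct Hd as [Hl Hn]. destruct p as [|c0 p]; [discriminate|]. destruct p; [|discriminate].
    simpl. ring.
  - destruct (has_degree_quot p m (z m) Hd) as [Hq Hqn].
    rewrite (quot_spec p (z m) x), (Hr m) by lia.
    rewrite (IH (quot p (z m)) z Hq).
    + rewrite Hqn. simpl. ring.
    + intros; apply Hz; lia.
    + intros i Hi. assert (E := quot_spec p (z m) (z i)). rewrite (Hr i) in E by lia.
      rewrite (Hr m) in E by lia. assert (z i - z m <> 0). { assert (z i <> z m) by (apply Hz; lia). lra. }
      assert (E2 : (z i - z m) * reval (quot p (z m)) (z i) = 0) by lra.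
      apply Rmult_integral in E2. destruct E2; [contradiction|assumption].
Qed.

Lemma Cmul_eq0 z w : Cmul z w = C0 -> z = C0 \/ w = C0.
Proof.
  destruct z as [x y], w as [u v]; unfold Cmul, C0; simpl; intros H.
  injection H as H1 H2.
  assert (E : (x*x + y*y) * (u*u + v*v) = 0) by nra.
  apply Rmult_integral in E. destruct E as [E|E].
  - left. assert (x = 0) by nra. assert (y = 0) by nra. subst; reflexivity.
  - right. assert (u = 0) by nra. assert (v = 0) by nra. subst; reflexivity.
Qed.

Lemma factor_cx : forall m p z,
  has_degree p m ->
  (forall i j, (i < m)%nat -> (j < m)%nat -> i <> j -> z i <> z j) ->
  (forall i, (i < m)%nat -> reval p (z i) = 0) ->
  forall w, ceval p w = C0 -> exists i, (i < m)%nat /\ w = mkC (z i) 0.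
Proof.
  induction m as [|m IH]; intros p z Hd Hz Hr w Hw.
  - destruct Hd as [Hl Hn]. destruct p as [|c0 p]; [discriminate|]. destruct p; [|discriminate].
    simpl in Hn. exfalso. apply Hn. unfold ceval, C0, Cadd, Cmul in Hw; simpl in Hw.
    injection Hw as H1 H2. lra.
  - destruct (has_degree_quot p m (z m) Hd) as [Hq Hqn].
    rewrite (quot_cspec p (z m) w), (Hr m) in Hw by lia.
    assert (Hm : Cmul (mkC (re w - z m) (im w)) (ceval (quot p (z m)) w) = C0).
    { apply Cx_eq; unfold C0 in *; destruct (Cmul _ _); simpl in *; injection Hw as H1 H2; lra. }
    apply Cmul_eq0 in Hm. destruct Hm as [Hm|Hm].
    + exists m. split. lia. unfold C0 in Hm. injection Hm as H1 H2. apply Cx_eq; simpl; lra.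
    + assert (Hr' : forall i, (i < m)%nat -> reval (quot p (z m)) (z i) = 0).
      { intros i Hi. assert (E := quot_spec p (z m) (z i)). rewrite (Hr i) in E by lia.
        rewrite (Hr m) in E by lia. assert (z i - z m <> 0). { assert (z i <> z m) by (apply Hz; lia). lra. }
        assert (E2 : (z i - z m) * reval (quot p (z m)) (z i) = 0) by lra.
        apply Rmult_integral in E2. destruct E2; [contradiction|assumption]. }
      assert (Hz' : forall i j, (i < m)%nat -> (j < m)%nat -> i <> j -> z i <> z j) by (intros; apply Hz; lia).
      destruct (IH (quot p (z m)) z Hq Hz' Hr' w Hm) as [i [Hi Hiw]].
      exists i; split; auto.
Qed.

Lemma prodf_sign : forall K z x j, (j <= K)%nat ->
  (forall i, (i < j)%nat -> z i < x) -> (forall i, (j <= i < K)%nat -> x < z i) ->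
  0 < (-1) ^ (K - j) * prodf z K x.
Proof.
  induction K as [|K IH]; intros z x j Hj H1 H2.
  - simpl. replace j with O by lia. simpl. lra.
  - simpl prodf. destruct (Nat.eq_dec j (S K)) as [->|Hne].
    + replace (S K - S K)%nat with O by lia.
      assert (0 < (-1)^(K-K) * prodf z K x) by (apply IH; auto; intros; lia).
      replace (K-K)%nat with O in H by lia. simpl in *.
      assert (z K < x) by (apply H1; lia). nra.
    + assert (0 < (-1)^(K-j) * prodf z K x) by (apply IH; auto; try lia; intros; apply H2; lia).
      replace (S K - j)%nat with (S (K - j)) by lia. simpl.
      assert (x < z K) by (apply H2; lia). nra.
Qed.


Definition mlin (r : R) (p : list R) : list R := padd (0 :: p) (pscal (-r) p).
Lemma reval_mlin r p x : reval (mlin r p) x = (x - r) * reval p x.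
Proof. unfold mlin. rewrite reval_padd, reval_cons, reval_pscal. ring. Qed.

Fixpoint EO (a c r : R) (m : nat) : list R * list R :=
  match m with
  | O => ([1], [0; 1])
  | S m' => let '(e, o) := EO a c r m' in
            let e' := padd (pscal a o) (pscal c e) in
            (e', padd (pscal a (mlin r e')) (pscal c o))
  end.
Definition Ef a c r m := fst (EO a c r m).
Definition Of a c r m := snd (EO a c r m).

Lemma Ef_S a c r m : Ef a c r (S m) = padd (pscal a (Of a c r m)) (pscal c (Ef a c r m)).
Proof. unfold Ef, Of; simpl. destruct (EO a c r m); reflexivity. Qed.
Lemma Of_S a c r m : Of a c r (S m) = padd (pscal a (mlin r (Ef a c r (S m)))) (pscal c (Of a c r m)).
Proof. rewrite Ef_S. unfold Ef, Of; simpl. destruct (EO a c r m); reflexivity. Qed.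

Definition eE a c r m x := reval (Ef a c r m) x.
Definition eO a c r m x := reval (Of a c r m) x.

Lemma eE_0 a c r x : eE a c r 0 x = 1.
Proof. unfold eE, Ef; simpl. ring. Qed.
Lemma eO_0 a c r x : eO a c r 0 x = x.
Proof. unfold eO, Of; simpl. ring. Qed.
Lemma eE_S a c r m x : eE a c r (S m) x = a * eO a c r m x + c * eE a c r m x.
Proof. unfold eE, eO. rewrite Ef_S, reval_padd, !reval_pscal. ring. Qed.
Lemma eO_S a c r m x : eO a c r (S m) x = a * (x - r) * eE a c r (S m) x + c * eO a c r m x.
Proof. unfold eE, eO. rewrite Of_S, reval_padd, !reval_pscal, reval_mlin. ring. Qed.

Lemma eE_SS a c r m x : eE a c r (S (S m)) x = (a^2 * (x - r) + 2 * c) * eE a c r (S m) x - c^2 * eE a c r m x.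
Proof.
  rewrite (eE_S _ _ _ (S m)), eO_S. rewrite (eE_S _ _ _ m) at 3.
  assert (H : a * eO a c r m x = eE a c r (S m) x - c * eE a c r m x) by (rewrite eE_S; ring).
  replace (a * (a * (x - r) * eE a c r (S m) x + c * eO a c r m x) + c * eE a c r (S m) x)
    with ((a^2 * (x - r) + c) * eE a c r (S m) x + c * (a * eO a c r m x)) by ring.
  rewrite H. rewrite eE_S. ring.
Qed.

Lemma eO_SS a c r m x : eO a c r (S (S m)) x = (a^2 * (x - r) + 2 * c) * eO a c r (S m) x - c^2 * eO a c r m x.
Proof.
  rewrite (eO_S _ _ _ (S m)), (eE_S _ _ _ (S m)).
  assert (H : a * (x - r) * eE a c r (S m) x = eO a c r (S m) x - c * eO a c r m x) by (rewrite (eO_S _ _ _ m); ring).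
  replace (a * (x - r) * (a * eO a c r (S m) x + c * eE a c r (S m) x) + c * eO a c r (S m) x)
    with ((a^2 * (x - r) + c) * eO a c r (S m) x + c * (a * (x - r) * eE a c r (S m) x)) by ring.
  rewrite H. ring.
Qed.

Lemma deg_EO a c r (ha : 0 < a) (hc : 0 < c) : forall m,
  length (Ef a c r m) = S m /\ length (Of a c r m) = S (S m) /\
  0 < nth m (Ef a c r m) 0 /\ 0 < nth (S m) (Of a c r m) 0.
Proof.
  induction m as [|m [H1 [H2 [H3 H4]]]].
  - unfold Ef, Of; simpl. repeat split; lra.
  - assert (L1 : length (Ef a c r (S m)) = S (S m)).
    { rewrite Ef_S, length_padd, !length_pscal. rewrite H1, H2. lia. }
    assert (N1 : nth (S m) (Ef a c r (S m)) 0 = a * nth (S m) (Of a c r m) 0).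
    { rewrite Ef_S, nth_padd, !nth_pscal. rewrite (nth_overflow (Ef a c r m)) by lia. ring. }
    repeat split.
    + exact L1.
    + rewrite Of_S, length_padd, !length_pscal. unfold mlin. rewrite length_padd, length_pscal.
      simpl. rewrite L1, H2. lia.
    + rewrite N1. apply Rmult_lt_0_compat; auto.
    + rewrite Of_S, nth_padd, !nth_pscal. unfold mlin. rewrite nth_padd, nth_pscal.
      rewrite (nth_overflow (Of a c r m)) by lia. rewrite (nth_overflow (Ef a c r (S m)) (n:=S (S m))) by lia.
      change (nth (S (S m)) (0 :: Ef a c r (S m)) 0) with (nth (S m) (Ef a c r (S m)) 0).
      rewrite N1. replace (a * (a * nth (S m) (Of a c r m) 0 + - r * 0) + c * 0)
        with (a * (a * nth (S m) (Of a c r m) 0)) by ring.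
      apply Rmult_lt_0_compat; auto. apply Rmult_lt_0_compat; auto.
Qed.

Lemma EO_at_r a c r (ha : 0 < a) (hc : 0 < c) (hr : 0 < r) : forall m,
  0 < eE a c r m r /\ 0 < eO a c r m r.
Proof.
  induction m as [|m [H1 H2]].
  - rewrite eE_0, eO_0. lra.
  - assert (0 < eE a c r (S m) r) by (rewrite eE_S; nra).
    split; auto. rewrite eO_S. replace (r - r) with 0 by ring. nra.
Qed.

Definition Zs (u r : R) (p : list R) (K : nat) (z : nat -> R) : Prop :=
  (forall i j, (i < j < K)%nat -> z i < z j) /\ (forall i, (i < K)%nat -> u < z i < r) /\
  (forall x, reval p x = nth K p 0 * prodf z K x).
Definition Inter (z2 z1 : nat -> R) (K1 K2 : nat) : Prop :=
  forall i, (i < K1)%nat -> z2 i < z1 i /\ ((S i < K2)%nat -> z1 i < z2 (S i)).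

Lemma sgn_sq n : (-1) ^ n * (-1) ^ n = 1.
Proof. induction n; simpl. ring. replace (-1 * (-1) ^ n * (-1 * (-1) ^ n)) with ((-1)^n * (-1)^n) by ring. auto. Qed.

Lemma sgn_opp n A B : 0 < (-1) ^ (S n) * A -> 0 < (-1) ^ n * B -> A * B < 0.
Proof.
  intros H1 H2. simpl in H1. pose proof (sgn_sq n) as Hs.
  set (s := (-1)^n) in *.
  assert (0 < -1 * s * A * (s * B)) by (apply Rmult_lt_0_compat; auto).
  replace (-1 * s * A * (s * B)) with (- (s * s) * (A * B)) in H by ring.
  rewrite Hs in H. lra.
Qed.

Lemma IVT_open (f : R -> R) x y : continuity f -> x < y -> f x * f y < 0 -> exists z, x < z < y /\ f z = 0.
Proof.
  intros Hc Hxy Hs.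
  destruct (IVT_cor f x y Hc) as [z [[H1 H2] H3]]. lra. lra.
  exists z. split; auto. split.
  - destruct H1 as [H1|H1]; auto. subst. rewrite H3 in Hs. lra.
  - destruct H2 as [H2|H2]; auto. subst. rewrite H3 in Hs. lra.
Qed.

Lemma step (u r c l0 : R) (h g0 : list R) (K0 K1 K2 : nat) (z1 z0 : nat -> R) :
  0 < c -> 0 < l0 -> has_degree h K2 -> K2 = S K0 -> (K1 = K0 \/ K1 = S K0) -> (1 <= K1)%nat ->
  (forall i j, (i < j < K1)%nat -> z1 i < z1 j) ->
  (forall i, (i < K1)%nat -> u < z1 i < r) ->
  (forall x, reval g0 x = l0 * prodf z0 K0 x) ->
  Inter z1 z0 K0 K1 ->
  (forall i, (i < K1)%nat -> reval h (z1 i) = c * reval g0 (z1 i)) ->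
  0 < (-1) ^ K2 * reval h u -> 0 < reval h r ->
  exists z2, Zs u r h K2 z2 /\ Inter z2 z1 K1 K2.
Proof.
  intros Hc Hl0 Hd HK2 HK1 HK1p Hz1s Hz1b Hg0 Hint Hh Hu Hr.
  assert (Hmono : forall i j, (i <= j < K1)%nat -> z1 i <= z1 j).
  { intros i j Hij. destruct (Nat.eq_dec i j) as [->|]. lra. left; apply Hz1s; lia. }
  assert (Hsg : forall i, (i < K1)%nat -> 0 < (-1) ^ (K0 - i) * reval h (z1 i)).
  { intros i Hi. rewrite Hh by auto. rewrite Hg0.
    assert (0 < (-1) ^ (K0 - i) * prodf z0 K0 (z1 i)).
    { apply prodf_sign. lia.
      - intros j Hj. destruct (Hint j) as [_ H2]. lia.
        assert (z0 j < z1 (S j)) by (apply H2; lia).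
        assert (z1 (S j) <= z1 i) by (apply Hmono; lia). lra.
      - intros j Hj. destruct (Hint j) as [H1 _]. lia.
        assert (z1 i <= z1 j) by (apply Hmono; lia). lra. }
    replace ((-1) ^ (K0 - i) * (c * (l0 * prodf z0 K0 (z1 i))))
      with ((c * l0) * ((-1) ^ (K0 - i) * prodf z0 K0 (z1 i))) by ring.
    apply Rmult_lt_0_compat; auto. apply Rmult_lt_0_compat; auto. }
  set (lo := fun k => match k with O => u | S k' => z1 k' end).
  set (hi := fun k => if Nat.ltb k K1 then z1 k else r).
  assert (Hex : forall k, exists w, (k < K2)%nat -> lo k < w < hi k /\ reval h w = 0).
  { intros k. destruct (Nat.lt_ge_cases k K2) as [Hk|Hk].
    2:{ exists 0. intros; lia. }
    assert (Hs : lo k < hi k /\ reval h (lo k) * reval h (hi k) < 0).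
    { unfold lo, hi. destruct k as [|k].
      - assert (Hlt : Nat.ltb 0 K1 = true) by (apply Nat.ltb_lt; lia). rewrite Hlt.
        split. apply Hz1b; lia.
        apply (sgn_opp K0). rewrite <- HK2. auto. replace K0 with (K0 - 0)%nat at 1 by lia. apply Hsg; lia.
      - destruct (Nat.ltb (S k) K1) eqn:E.
        + apply Nat.ltb_lt in E. split. apply Hz1s; lia.
          apply (sgn_opp (K0 - S k)). replace (S (K0 - S k)) with (K0 - k)%nat by lia. apply Hsg; lia.
          apply Hsg; lia.
        + apply Nat.ltb_ge in E. assert (S k = K1) by lia. assert (K1 = K0) by lia.
          split. apply Hz1b; lia.
          assert (Hq := Hsg k ltac:(lia)). replace (K0 - k)%nat with 1%nat in Hq by lia.
          simpl in Hq. nra. }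
    destruct Hs as [Hs1 Hs2].
    destruct (IVT_open (fun x => reval h x) (lo k) (hi k) (reval_cont h) Hs1 Hs2) as [w Hw].
    exists w; intros; auto. }
  set (z2 := fun k => proj1_sig (constructive_indefinite_description _ (Hex k))).
  assert (Hz2 : forall k, (k < K2)%nat -> lo k < z2 k < hi k /\ reval h (z2 k) = 0).
  { intros k Hk. unfold z2. destruct (constructive_indefinite_description _ (Hex k)) as [w Hw]. simpl. auto. }
  assert (Hlohi : forall i j, (i < j < K2)%nat -> hi i <= lo j).
  { intros i j Hij. unfold lo, hi. destruct j as [|j]. lia.
    destruct (Nat.ltb i K1) eqn:E.
    - apply Nat.ltb_lt in E. apply Hmono; lia.
    - apply Nat.ltb_ge in E. lia. }
  assert (Hlo : forall k, (k < K2)%nat -> u <= lo k).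
  { intros [|k] Hk; unfold lo. lra. left; apply Hz1b; lia. }
  assert (Hhi : forall k, (k < K2)%nat -> hi k <= r).
  { intros k Hk; unfold hi. destruct (Nat.ltb k K1) eqn:E. apply Nat.ltb_lt in E. left; apply Hz1b; lia. lra. }
  assert (Hinc : forall i j, (i < j < K2)%nat -> z2 i < z2 j).
  { intros i j Hij. destruct (Hz2 i) as [[A1 A2] _]. lia. destruct (Hz2 j) as [[B1 B2] _]. lia.
    assert (hi i <= lo j) by (apply Hlohi; lia). lra. }
  exists z2. split; [split; [|split]|].
  - exact Hinc.
  - intros i Hi. destruct (Hz2 i Hi) as [[A1 A2] _]. pose proof (Hlo i Hi). pose proof (Hhi i Hi). lra.
  - apply factor_real; auto.
    + intros i j Hi Hj Hij. destruct (Nat.lt_total i j) as [H|[H|H]]; [|lia|].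
      * assert (z2 i < z2 j) by (apply Hinc; lia). lra.
      * assert (z2 j < z2 i) by (apply Hinc; lia). lra.
    + intros i Hi. apply Hz2; auto.
  - intros i Hi. split.
    + destruct (Hz2 i) as [[_ A2] _]. lia. unfold hi in A2.
      assert (Nat.ltb i K1 = true) by (apply Nat.ltb_lt; auto). rewrite H in A2. auto.
    + intros Hs. destruct (Hz2 (S i) Hs) as [[A1 _] _]. exact A1.
Qed.

Lemma prodf_root z K i : (i < K)%nat -> prodf z K (z i) = 0.
Proof.
  induction K as [|K IH]; intros Hi. lia. simpl.
  destruct (Nat.eq_dec i K) as [->|Hne]. ring. rewrite IH by lia. ring.
Qed.

Lemma Zs_root u r p K z i : Zs u r p K z -> (i < K)%nat -> reval p (z i) = 0.
Proof. intros [_ [_ H]] Hi. rewrite H, prodf_root by auto. ring. Qed.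

Lemma zeros_all a c r u (ha : 0 < a) (hc : 0 < c) (hr : 0 < r) (hu : u < 0)
  (HsE : forall m, 0 < (-1)^m * eE a c r m u) (HsO : forall m, 0 < (-1)^(S m) * eO a c r m u) :
  forall m, exists zo ze, Zs u r (Of a c r m) (S m) zo /\ Zs u r (Ef a c r m) m ze /\ Inter zo ze m (S m).
Proof.
  induction m as [|m [zo [ze [Ho [He Hi]]]]].
  - exists (fun _ => 0), (fun _ => 0). split; [|split].
    + split; [|split].
      * intros; lia.
      * intros; lra.
      * intros x. unfold Of; simpl. ring.
    + split; [|split]. intros; lia. intros; lia. intros x. unfold Ef; simpl. ring.
    + intros i Hi; lia.
  - destruct (deg_EO a c r ha hc m) as [L1 [L2 [N1 N2]]].
    destruct (deg_EO a c r ha hc (S m)) as [L1' [L2' [N1' N2']]].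
    destruct (EO_at_r a c r ha hc hr (S m)) as [R1 R2].
    assert (Hh1 : forall i, (i < S m)%nat -> reval (Ef a c r (S m)) (zo i) = c * reval (Ef a c r m) (zo i)).
    { intros i Hi'. change (eE a c r (S m) (zo i) = c * eE a c r m (zo i)).
      rewrite eE_S. unfold eO. rewrite (Zs_root _ _ _ _ _ _ Ho Hi'). ring. }
    destruct Ho as [Ho1 [Ho2 Ho3]]. destruct He as [He1 [He2 He3]].
    destruct (step u r c (nth m (Ef a c r m) 0) (Ef a c r (S m)) (Ef a c r m) m (S m) (S m) zo ze
      hc N1 (conj L1' (Rgt_not_eq _ _ N1')) eq_refl (or_intror eq_refl) ltac:(lia) Ho1 Ho2 He3 Hi Hh1 (HsE (S m)) R1)
      as [ze' [He' Hi']].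
    assert (Hh2 : forall i, (i < S m)%nat -> reval (Of a c r (S m)) (ze' i) = c * reval (Of a c r m) (ze' i)).
    { intros i Hi2. change (eO a c r (S m) (ze' i) = c * eO a c r m (ze' i)).
      rewrite eO_S. unfold eE. rewrite (Zs_root _ _ _ _ _ _ He' Hi2). ring. }
    destruct He' as [He1' [He2' He3']].
    destruct (step u r c (nth (S m) (Of a c r m) 0) (Of a c r (S m)) (Of a c r m) (S m) (S m) (S (S m)) ze' zo
      hc N2 (conj L2' (Rgt_not_eq _ _ N2')) eq_refl (or_introl eq_refl) ltac:(lia) He1' He2' Ho3 Hi' Hh2 (HsO (S m)) R2)
      as [zo' [Ho' Hi'']].
    exists zo', ze'. split; auto. split; auto. split; auto.
Qed.

Lemma zeros_final p K z : has_degree p K -> (forall i j, (i < j < K)%nat -> z i < z j) ->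
  (forall i, (i < K)%nat -> reval p (z i) = 0) ->
  forall w, ceval p w = C0 -> exists i, (i < K)%nat /\ w = mkC (z i) 0.
Proof.
  intros Hd Hinc Hr w Hw. apply (factor_cx K p z Hd); auto.
  intros i j Hi Hj Hij. destruct (Nat.lt_total i j) as [H|[H|H]]; [|lia|].
  - assert (z i < z j) by (apply Hinc; lia). lra.
  - assert (z j < z i) by (apply Hinc; lia). lra.
Qed.

Lemma has_degree_scal k p K : k <> 0 -> has_degree p K -> has_degree (pscal k p) K.
Proof.
  intros Hk [Hl Hn]. split. rewrite length_pscal; auto. rewrite nth_pscal.
  intro H. apply Rmult_integral in H. tauto.
Qed.

Lemma ceval_real p x : ceval p (mkC x 0) = mkC (reval p x) 0.
Proof.
  induction p as [|c p IH]. reflexivity.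
  rewrite ceval_cons, IH, reval_cons. apply Cx_eq; simpl; ring.
Qed.

Lemma neg_pow_sign q m : q < 0 -> 0 < (-1)^m * q^m.
Proof.
  intros Hq. rewrite <- Rpow_mult_distr. apply pow_lt. lra.
Qed.

Lemma signs_g a c r u (ha : 0 < a) (hc : 0 < c) (hu : u < 0) (ht : u < r)
  (hg : u^2 = (u - r) * (a * u + c)) :
  (forall m, 0 < (-1)^m * eE a c r m u) /\ (forall m, 0 < (-1)^(S m) * eO a c r m u).
Proof.
  set (q := a * u + c).
  assert (Hq : q < 0). { assert (0 < u^2) by nra. unfold q. nra. }
  assert (Hv : forall m, eE a c r m u = q^m /\ eO a c r m u = u * q^m).
  { induction m as [|m [H1 H2]].
    - rewrite eE_0, eO_0. simpl. split; ring.
    - assert (E1 : eE a c r (S m) u = q^(S m)) by (rewrite eE_S, H1, H2; unfold q; simpl; ring).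
      split; auto. rewrite eO_S, E1, H2. simpl.
      replace (a * (u - r) * (q * q ^ m) + c * (u * q ^ m)) with (q^m * ((u - r) * (a * u + c) * a + c * u)) by (unfold q; ring).
      rewrite <- hg. unfold q. ring. }
  split; intros m; destruct (Hv m) as [H1 H2].
  - rewrite H1. apply neg_pow_sign; auto.
  - rewrite H2. simpl. pose proof (neg_pow_sign q m Hq).
    replace (-1 * (-1) ^ m * (u * q ^ m)) with ((-u) * ((-1)^m * q^m)) by ring.
    apply Rmult_lt_0_compat; lra.
Qed.

Lemma signs_band a c r u (ha : 0 < a) (hc : 0 < c) (hu : u = r - 4 * c / a^2) (hk : u <= - 2 * c / a) :
  (forall m, 0 < (-1)^m * eE a c r m u) /\ (forall m, 0 < (-1)^(S m) * eO a c r m u).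
Proof.
  set (l := - 2 * c / a).
  set (k := u / l - 1).
  assert (Hal : a * l = - 2 * c) by (unfold l; field; lra).
  assert (Hl : l < 0) by nra.
  assert (Hld : l = - 2 * c / a) by reflexivity. clearbody l.
  assert (Hk : 0 <= k). { unfold k. assert (1 <= u / l). { apply (Rmult_le_reg_r (-l)). lra.
      replace (u / l * - l) with (- u) by (field; lra). lra. } lra. }
  assert (Hat : a * (u - r) = 2 * l) by (rewrite hu, Hld; field; lra).
  assert (Hul : u = l * (1 + k)) by (unfold k; field; lra).
  assert (Hv : forall m, eE a c r m u = (-c)^m * (1 + 2 * INR m * k) /\
                         eO a c r m u = (-c)^m * l * (1 + (2 * INR m + 1) * k)).
  { induction m as [|m [H1 H2]].
    - rewrite eE_0, eO_0. simpl. split; [ring|]. rewrite Hul. ring.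
    - assert (E1 : eE a c r (S m) u = (-c)^(S m) * (1 + 2 * INR (S m) * k)).
      { rewrite eE_S, H1, H2, S_INR. simpl.
        replace (a * ((- c) ^ m * l * (1 + (2 * INR m + 1) * k))) with ((-c)^m * (a * l) * (1 + (2 * INR m + 1) * k)) by ring.
        rewrite Hal. ring. }
      split; auto. rewrite eO_S, E1, H2, S_INR. simpl.
      replace (a * (u - r) * (- c * (- c) ^ m * (1 + 2 * (INR m + 1) * k))) with
        ((a * (u - r)) * (- c * (- c) ^ m * (1 + 2 * (INR m + 1) * k))) by ring.
      rewrite Hat. ring. }
  assert (Hm0 : forall m, 0 <= INR m) by (intros; apply pos_INR).
  split; intros m; destruct (Hv m) as [H1 H2].
  - rewrite H1. replace ((-1) ^ m * ((- c) ^ m * (1 + 2 * INR m * k))) with (((-1)^m * (-c)^m) * (1 + 2 * INR m * k)) by ring.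
    rewrite <- Rpow_mult_distr. apply Rmult_lt_0_compat. apply pow_lt. lra.
    specialize (Hm0 m). nra.
  - rewrite H2. simpl.
    replace (-1 * (-1) ^ m * ((- c) ^ m * l * (1 + (2 * INR m + 1) * k))) with (((-1)^m * (-c)^m) * (-l) * (1 + (2 * INR m + 1) * k)) by ring.
    rewrite <- Rpow_mult_distr. apply Rmult_lt_0_compat. apply Rmult_lt_0_compat. apply pow_lt. lra. lra.
    specialize (Hm0 m). nra.
Qed.

Definition gq a c r z := (1 - a) * z^2 + (a * r - c) * z + c * r.

Lemma gpart a c r uu (ha : 0 < a) (hc : 0 < c) (hr : 0 < r) (hF : 2 * c * (2 - a) < a^2 * r)
  (hg : gq a c r uu = 0) (hu : uu < 0) (hL : forall z, uu < z <= 0 -> 0 < gq a c r z) :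
  uu^2 = (uu - r) * (a * uu + c) /\ 0 < (2 - a) * uu + a * r.
Proof.
  unfold gq in *. split.
  - assert (H : uu^2 - (uu - r) * (a * uu + c) = (1 - a) * uu^2 + (a * r - c) * uu + c * r) by ring. lra.
  - destruct (Rlt_dec a 2) as [H2|H2].
    2:{ assert (0 <= (2 - a) * uu) by nra. nra. }
    set (zs := - a * r / (2 - a)).
    assert (Hzs : (2 - a) * zs = - a * r) by (unfold zs; field; lra).
    assert (Hzs0 : zs < 0) by nra.
    assert (Hid : 4 * ((1 - a) * zs^2 + (a * r - c) * zs + c * r) =
                  ((2 - a) * zs + a * r)^2 - (zs - r) * (a^2 * (zs - r) + 4 * c)) by ring.
    rewrite Hzs in Hid.
    assert (Ht : (2 - a) * (zs - r) = - 2 * r) by lra.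
    assert (Hzr : zs - r < 0) by nra.
    assert (Hd2 : a^2 * (zs - r) + 4 * c < 0).
    { apply (Rmult_lt_reg_l (2 - a)). lra. 
      replace ((2 - a) * (a ^ 2 * (zs - r) + 4 * c)) with (a^2 * ((2 - a) * (zs - r)) + 4 * c * (2 - a)) by ring.
      rewrite Ht. nra. }
    assert (Hgz : (1 - a) * zs^2 + (a * r - c) * zs + c * r < 0).
    { assert (0 < (zs - r) * (a ^ 2 * (zs - r) + 4 * c)) by nra. nra. }
    destruct (Rle_lt_dec ((2 - a) * uu + a * r) 0) as [Hle|Hlt]; auto.
    exfalso. assert (uu <= zs) by nra.
    destruct (Rle_lt_or_eq_dec _ _ H) as [Hl|He].
    + assert (0 < (1 - a) * zs^2 + (a * r - c) * zs + c * r) by (apply hL; lra). lra.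
    + subst uu. lra.
Qed.

Lemma u_cases a b c d r (ha : 0 < a) (hc : 0 < c) (hr : 0 < r) (eb : b = - a * r) (ed : d = - c * r) :
  u a b c d < 0 /\
  ((u a b c d = r - 4 * c / a^2 /\ u a b c d <= - 2 * c / a) \/
   (u a b c d ^2 = (u a b c d - r) * (a * u a b c d + c) /\ 0 < (2 - a) * u a b c d + a * r /\
    (forall z, u a b c d < z <= 0 -> 0 < gq a c r z))).
Proof.
  assert (HF : Ff a b c d = r * (a^2 * r - 2 * c * (2 - a))) by (unfold Ff; subst; ring).
  assert (HDg : Deltag a b c d = (c - a * r)^2 - 4 * c * r * (1 - a)) by (unfold Deltag; subst; ring).
  assert (Groot : 2 * c * (2 - a) < a^2 * r -> forall uu, gq a c r uu = 0 -> uu < 0 ->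
            (forall z, uu < z <= 0 -> 0 < gq a c r z) ->
            uu < 0 /\ ((uu = r - 4 * c / a^2 /\ uu <= - 2 * c / a) \/
            (uu^2 = (uu - r) * (a * uu + c) /\ 0 < (2 - a) * uu + a * r /\ (forall z, uu < z <= 0 -> 0 < gq a c r z)))).
  { intros hF uu hg hu hL. destruct (gpart a c r uu ha hc hr hF hg hu hL). split; auto. }
  set (s := sqrt (Deltag a b c d)).
  assert (Gne : a <> 1 -> 2 * c * (2 - a) < a^2 * r ->
            let uu := ((b + c) + s) / (2 * (1 - a)) in
            uu < 0 /\ ((uu = r - 4 * c / a^2 /\ uu <= - 2 * c / a) \/
            (uu^2 = (uu - r) * (a * uu + c) /\ 0 < (2 - a) * uu + a * r /\ (forall z, uu < z <= 0 -> 0 < gq a c r z)))).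
  { intros Ha1 hF uu.
    assert (HDpos : 0 < Deltag a b c d).
    { rewrite HDg. assert (Deltag a b c d = c^2 + Ff a b c d) by (unfold Deltag, Ff; subst; ring).
      rewrite HF in H. rewrite HDg in H. rewrite H. assert (0 < r * (a ^ 2 * r - 2 * c * (2 - a))) by nra. nra. }
    assert (Hs : s * s = Deltag a b c d) by (apply sqrt_sqrt; lra).
    assert (Hs0 : 0 < s) by (apply sqrt_lt_R0; lra).
    assert (Hw : 2 * (1 - a) * uu - (b + c) = s) by (unfold uu; field; lra).
    assert (Hbc : a < 1 -> b + c < 0).
    { intros. subst b. assert (2 * c < a * r). { assert (2 * c * a < a^2 * r) by nra. nra. } nra. }
    assert (HsB : b + c < s).
    { destruct (Rlt_dec a 1). specialize (Hbc r0). lra.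
      destruct (Rle_lt_dec (b + c) 0). lra.
      assert ((b+c)^2 < s * s). { rewrite Hs, HDg. subst b. assert (1 < a) by lra. assert (0 < c * r * (a - 1)) by (apply Rmult_lt_0_compat; nra). nra. } nra. }
    assert (hu : uu < 0).
    { destruct (Rlt_dec a 1) as [H1|H1].
      - assert (s < - (b + c)). { assert (s * s < (b+c)^2). { rewrite Hs, HDg. subst b. assert (0 < c * r * (1 - a)) by (apply Rmult_lt_0_compat; nra). nra. }
          specialize (Hbc H1). nra. }
        assert (2 * (1 - a) * uu < 0) by lra. nra.
      - assert (2 * (1 - a) * uu > 0). { assert (s > - (b + c)).
          { assert ((b+c)^2 < s * s). { rewrite Hs, HDg. subst b. assert (1 < a) by lra. assert (0 < c * r * (a - 1)) by (apply Rmult_lt_0_compat; nra). nra. } nra. } lra. }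
        assert (1 < a) by lra. nra. }
    apply Groot; auto.
    - unfold gq. apply (Rmult_eq_reg_l (4 * (1 - a))). 2: lra.
      replace (4 * (1 - a) * ((1 - a) * uu ^ 2 + (a * r - c) * uu + c * r)) with
        ((2 * (1 - a) * uu - (b + c))^2 - ((b + c)^2 + 4 * (- c * r) * (1 - a))) by (subst b; ring).
      rewrite Hw. replace (s^2) with (s * s) by ring. rewrite Hs, HDg. subst b. ring.
    - intros z Hz. unfold gq.
      assert (Hg0 : (1 - a) * uu ^ 2 + (a * r - c) * uu + c * r = 0).
      { apply (Rmult_eq_reg_l (4 * (1 - a))). 2: lra.
        replace (4 * (1 - a) * ((1 - a) * uu ^ 2 + (a * r - c) * uu + c * r)) with
          ((2 * (1 - a) * uu - (b + c))^2 - ((b + c)^2 + 4 * (- c * r) * (1 - a))) by (subst b; ring).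
        rewrite Hw. replace (s^2) with (s * s) by ring. rewrite Hs, HDg. subst b. ring. }
      assert (Hdiff : (1 - a) * z ^ 2 + (a * r - c) * z + c * r =
                      (z - uu) * ((1 - a) * (z + uu) - (b + c))) by (subst b; nra).
      rewrite Hdiff. apply Rmult_lt_0_compat. lra.
      destruct (Rlt_dec a 1); nra. }
  unfold u, xDelta_minus, xg_plus, xg_minus. fold s.
  destruct (Rlt_dec a 2) as [Ha2|Ha2].
  - destruct (Rle_dec (Ff a b c d) 0) as [HF0|HF0].
    + assert (HDD : DeltaDelta a b c d = c^2). { unfold DeltaDelta, Bf, xA. subst. field. lra. }
      rewrite HDD, sqrt_pow2 by lra. unfold xA.
      assert (Hr2 : a^2 * r <= 2 * c * (2 - a)). { rewrite HF in HF0. nra. }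
      assert (Eu : - b / a + (- 2 * c - 2 * c) / a ^ 2 = r - 4 * c / a^2) by (subst; field; lra).
      rewrite Eu. split.
      * assert (r <= 2 * c * (2 - a) / a^2). { apply (Rmult_le_reg_r (a^2)). nra.
          replace (2 * c * (2 - a) / a ^ 2 * a ^ 2) with (2 * c * (2 - a)) by (field; lra). lra. }
        assert (4 * c / a^2 > 2 * c * (2 - a) / a^2). { unfold Rdiv. apply Rmult_gt_compat_r.
          apply Rinv_0_lt_compat; nra. nra. } lra.
      * left. split; auto.
        apply (Rmult_le_reg_r (a^2)). nra.
        replace ((r - 4 * c / a ^ 2) * a ^ 2) with (r * a^2 - 4 * c) by (field; lra).
        replace (- 2 * c / a * a ^ 2) with (- 2 * c * a) by (field; lra). nra.
    + assert (hF : 2 * c * (2 - a) < a^2 * r). { rewrite HF in HF0. nra. }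
      destruct (Rlt_dec a 1) as [Ha1|Ha1].
      * destruct (Req_EM_T a 1). lra.
        rewrite Rabs_right by lra.
        replace ((b + c) / (2 * (1 - a)) + s / (2 * (1 - a))) with (((b + c) + s) / (2 * (1 - a))) by (field; lra).
        apply Gne; lra.
      * destruct (Req_EM_T a 1) as [Ea|Ea].
        -- subst a. assert (Hbc : b + c < 0) by (subst b; nra).
           set (uu := - d / (b + c)).
           assert (Huu : (b + c) * uu = - d) by (unfold uu; field; lra).
           assert (hu : uu < 0) by nra.
           apply Groot; auto.
           ++ unfold gq. subst b d. nra.
           ++ intros z Hz. unfold gq. subst b d. nra.
        -- rewrite Rabs_left by lra.
           replace ((b + c) / (2 * (1 - a)) - s / (2 * - (1 - a))) with (((b + c) + s) / (2 * (1 - a))) by (field; lra).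
           apply Gne; lra.
  - assert (hF : 2 * c * (2 - a) < a^2 * r).
    { assert (c * (2 - a) <= 0) by nra. assert (0 < a^2 * r) by (apply Rmult_lt_0_compat; nra). lra. }
    destruct (Req_EM_T a 1). lra.
    rewrite Rabs_left by lra.
    replace ((b + c) / (2 * (1 - a)) - s / (2 * - (1 - a))) with (((b + c) + s) / (2 * (1 - a))) by (field; lra).
    apply Gne; lra.
Qed.

Lemma sin_rec x t : sin (x + t) = 2 * cos t * sin x - sin (x - t).
Proof. rewrite sin_plus, sin_minus. ring. Qed.

Lemma cheb (s : nat -> R) t : (forall j, s (S (S j)) = 2 * cos t * s (S j) - s j) ->
  forall j, s (S j) * sin t = s 1%nat * sin (INR (S j) * t) - s 0%nat * sin (INR j * t).
Proof.
  intros Hs.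
  assert (forall j, s (S j) * sin t = s 1%nat * sin (INR (S j) * t) - s 0%nat * sin (INR j * t) /\
                    s (S (S j)) * sin t = s 1%nat * sin (INR (S (S j)) * t) - s 0%nat * sin (INR (S j) * t)).
  { induction j as [|j [IH1 IH2]].
    - split.
      + simpl. replace (1 * t) with t by ring. replace (0 * t) with 0 by ring. rewrite sin_0. ring.
      + rewrite Hs. replace (INR 2 * t) with (2 * t) by (simpl; ring). simpl. replace (1 * t) with t by ring.
        rewrite sin_2a. ring.
    - split; auto. rewrite Hs.
      assert (R3 : sin (INR (S (S (S j))) * t) = 2 * cos t * sin (INR (S (S j)) * t) - sin (INR (S j) * t)).
      { replace (INR (S (S (S j))) * t) with (INR (S (S j)) * t + t) by (rewrite !S_INR; ring).
        rewrite sin_rec. replace (INR (S (S j)) * t - t) with (INR (S j) * t) by (rewrite !S_INR; ring). reflexivity. }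
      assert (R2 : sin (INR (S (S j)) * t) = 2 * cos t * sin (INR (S j) * t) - sin (INR j * t)).
      { replace (INR (S (S j)) * t) with (INR (S j) * t + t) by (rewrite !S_INR; ring).
        rewrite sin_rec. replace (INR (S j) * t - t) with (INR j * t) by (rewrite !S_INR; ring). reflexivity. }
      replace ((2 * cos t * s (S (S j)) - s (S j)) * sin t) with (2 * cos t * (s (S (S j)) * sin t) - s (S j) * sin t) by ring.
      rewrite IH2, IH1, R3, R2. ring. }
  intros j; apply H.
Qed.

Lemma sin_kPI k : sin (INR k * PI) = 0 /\ cos (INR k * PI) = (-1)^k.
Proof.
  induction k as [|k [H1 H2]].
  - simpl. replace (0 * PI) with 0 by ring. rewrite sin_0, cos_0. split; ring.
  - rewrite S_INR. replace ((INR k + 1) * PI) with (INR k * PI + PI) by ring.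
    rewrite sin_plus, cos_plus, H1, H2, sin_PI, cos_PI. simpl. split; ring.
Qed.

Lemma cheb_val (s : nat -> R) m k : (2 <= m)%nat -> (1 <= k < m)%nat ->
  let t := INR k * PI / INR m in
  (forall j, s (S (S j)) = 2 * cos t * s (S j) - s j) -> s m = (-1)^k * s 0%nat.
Proof.
  intros Hm Hk t Hs.
  assert (Hm0 : 0 < INR m) by (apply lt_0_INR; lia).
  assert (Ht : 0 < t < PI).
  { unfold t. split.
    - apply Rdiv_lt_0_compat; auto. apply Rmult_lt_0_compat. apply lt_0_INR; lia. apply PI_RGT_0.
    - assert (INR k < INR m) by (apply lt_INR; lia). pose proof PI_RGT_0.
      apply (Rmult_lt_reg_r (INR m)); auto.
      replace (INR k * PI / INR m * INR m) with (INR k * PI) by (field; lra). nra. }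
  assert (Hsin : 0 < sin t) by (apply sin_gt_0; lra).
  destruct m as [|m]. lia.
  pose proof (cheb s t Hs m) as E.
  assert (E1 : INR (S m) * t = INR k * PI) by (unfold t; field; lra).
  assert (E2 : INR m * t = INR k * PI - t) by (rewrite S_INR in E1; lra).
  rewrite E1, E2, sin_minus in E. destruct (sin_kPI k) as [S1 C1]. rewrite S1, C1 in E.
  apply (Rmult_eq_reg_r (sin t)). rewrite E. ring. lra.
Qed.

Lemma cheb_EO a c r (ha : 0 < a) (hc : 0 < c) m k : (2 <= m)%nat -> (1 <= k < m)%nat ->
  let x := r + 2 * c * (cos (INR k * PI / INR m) - 1) / a^2 in
  eE a c r m x = c^m * (-1)^k /\ eO a c r m x = c^m * (-1)^k * x.
Proof.
  intros Hm Hk x.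
  set (t := INR k * PI / INR m) in *.
  assert (Hx : a^2 * (x - r) + 2 * c = 2 * c * cos t) by (unfold x; field; lra).
  assert (Hc : forall j, c ^ j <> 0) by (intros; apply pow_nonzero; lra).
  split.
  - set (s := fun j => eE a c r j x / c^j).
    assert (Hs : forall j, s (S (S j)) = 2 * cos t * s (S j) - s j).
    { intros j. unfold s. rewrite eE_SS, Hx. simpl. field. split; auto. lra. }
    pose proof (cheb_val s m k Hm Hk Hs) as E. unfold s in E. simpl in E. rewrite eE_0 in E.
    replace (eE a c r m x) with (c^m * (eE a c r m x / c^m)) by (field; auto). rewrite E. field.
  - set (s := fun j => eO a c r j x / c^j).
    assert (Hs : forall j, s (S (S j)) = 2 * cos t * s (S j) - s j).
    { intros j. unfold s. rewrite eO_SS, Hx. simpl. field. split; auto. lra. }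
    pose proof (cheb_val s m k Hm Hk Hs) as E. unfold s in E. simpl in E. rewrite eO_0 in E.
    replace (eO a c r m x) with (c^m * (eO a c r m x / c^m)) by (field; auto). rewrite E. field.
Qed.

Lemma cos_small K d : 0 < K -> 0 < d -> exists M, forall m, (M <= m)%nat ->
  (2 <= m)%nat /\ 0 < K * (1 - cos (PI / INR m)) < d.
Proof.
  intros HK Hd.
  destruct (INR_archimed 1 (8 * K / d + 2)) as [M HM]. lra.
  exists M. intros m Hm.
  assert (HMm : INR M <= INR m) by (apply le_INR; auto).
  assert (Hm2 : (2 <= m)%nat).
  { assert (2 < INR m) by (assert (0 <= 8 * K / d) by (apply Rlt_le, Rdiv_lt_0_compat; lra); lra).
    assert (INR 1 < INR m) by (simpl; lra). apply INR_lt in H0. destruct m; [simpl in H; lra|].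
    destruct m; [simpl in H; lra|]. lia. }
  split; auto.
  assert (Hm0 : 2 <= INR m) by (replace 2 with (INR 2) by (simpl; ring); apply le_INR; auto).
  pose proof PI_RGT_0 as Hpi. pose proof PI_4 as Hpi4.
  set (t := PI / INR m).
  assert (Ht0 : 0 < t) by (unfold t; apply Rdiv_lt_0_compat; lra).
  assert (Ht2 : t <= PI / 2).
  { unfold t. apply (Rmult_le_reg_r (INR m)). lra. replace (PI / INR m * INR m) with PI by (field; lra). nra. }
  split.
  - assert (cos t < cos 0) by (apply cos_decreasing_1; lra). rewrite cos_0 in H. nra.
  - destruct (cos_bound t 0) as [Hc _]. lra. lra.
    assert (E : cos_approx t (2 * 0 + 1) = 1 - t^2/2) by (unfold cos_approx, cos_term; simpl; field).
    rewrite E in Hc.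
    assert (Htm : t * INR m = PI) by (unfold t; field; lra).
    assert (Hbd : t^2 * INR m <= 8).
    { assert (t * INR m * t <= 4 * t) by (rewrite Htm; nra). 
      assert (t <= 2) by lra. nra. }
    assert (K * (1 - cos t) <= K * (t^2 / 2)) by (apply Rmult_le_compat_l; lra).
    assert (K * (t^2/2) * INR m <= 4 * K) by nra.
    assert (8 * K / d * d = 8 * K) by (field; lra).
    assert (K * (t^2/2) * INR m < d * INR m - d) by nra.
    nra.
Qed.

Lemma near_r a c r (ha : 0 < a) (hc : 0 < c) (hr : 0 < r) : forall eps, 0 < eps ->
  exists M, forall m, (M <= m)%nat ->
  (exists x, r - eps < x < r /\ eE a c r m x = 0) /\ (exists x, r - eps < x < r /\ eO a c r m x = 0).
Proof.
  intros eps Heps.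
  destruct (cos_small (2 * c / a^2) (Rmin eps r)) as [M HM].
  apply Rdiv_lt_0_compat; nra. apply Rmin_glb_lt; lra.
  exists M. intros m Hm. destruct (HM m Hm) as [Hm2 [H1 H2]].
  destruct (cheb_EO a c r ha hc m 1 Hm2 ltac:(lia)) as [E1 E2].
  set (x := r + 2 * c * (cos (INR 1 * PI / INR m) - 1) / a ^ 2) in *.
  assert (Hx : x = r - 2 * c / a^2 * (1 - cos (PI / INR m))).
  { unfold x. replace (INR 1 * PI) with PI by (simpl; ring). field. lra. }
  assert (Hmin1 := Rmin_l eps r). assert (Hmin2 := Rmin_r eps r).
  destruct (EO_at_r a c r ha hc hr m) as [R1 R2].
  assert (Hcm : 0 < c^m) by (apply pow_lt; lra).
  split.
  - destruct (IVT_open (fun y => eE a c r m y) x r) as [z [Hz1 Hz2]].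
    apply reval_cont. lra. rewrite E1. simpl. nra.
    exists z. split; [lra|auto].
  - destruct (IVT_open (fun y => eO a c r m y) x r) as [z [Hz1 Hz2]].
    apply reval_cont. lra. rewrite E2. simpl.
    assert (0 < x) by lra. assert (0 < c^m * x) by nra. nra.
    exists z. split; [lra|auto].
Qed.

Lemma near_e a c r u (ha : 0 < a) (hc : 0 < c) (hr : 0 < r) (hu0 : u < 0) (hue : u = r - 4 * c / a^2)
  (HsE : forall m, 0 < (-1)^m * eE a c r m u) (HsO : forall m, 0 < (-1)^(S m) * eO a c r m u) :
  forall eps, 0 < eps ->
  exists M, forall m, (M <= m)%nat ->
  (exists x, u < x < u + eps /\ eE a c r m x = 0) /\ (exists x, u < x < u + eps /\ eO a c r m x = 0).
Proof.
  intros eps Heps.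
  destruct (cos_small (2 * c / a^2) (Rmin eps (- u))) as [M HM].
  apply Rdiv_lt_0_compat; nra. apply Rmin_glb_lt; lra.
  exists M. intros m Hm. destruct (HM m Hm) as [Hm2 [H1 H2]].
  destruct m as [|m']. lia.
  destruct (cheb_EO a c r ha hc (S m') m' Hm2 ltac:(lia)) as [E1 E2].
  set (x := r + 2 * c * (cos (INR m' * PI / INR (S m')) - 1) / a ^ 2) in *.
  assert (Hm0 : 0 < INR (S m')) by (apply lt_0_INR; lia).
  assert (Hcos : cos (INR m' * PI / INR (S m')) = - cos (PI / INR (S m'))).
  { replace (INR m' * PI / INR (S m')) with (PI - PI / INR (S m')).
    apply Rtrigo_facts.cos_pi_minus. rewrite S_INR in *. field. lra. }
  assert (Hx : x = u + 2 * c / a^2 * (1 - cos (PI / INR (S m')))).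
  { unfold x. rewrite Hcos, hue. field. lra. }
  assert (Hmin1 := Rmin_l eps (-u)). assert (Hmin2 := Rmin_r eps (-u)).
  assert (Hcm : 0 < c^(S m')) by (apply pow_lt; lra).
  pose proof (sgn_sq m') as Hsq.
  split.
  - destruct (IVT_open (fun y => eE a c r (S m') y) u x) as [z [Hz1 Hz2]].
    apply reval_cont. lra.
    apply (sgn_opp m'). apply HsE. rewrite E1.
    replace ((-1) ^ m' * (c ^ S m' * (-1) ^ m')) with (c ^ S m' * ((-1) ^ m' * (-1) ^ m')) by ring.
    rewrite Hsq. lra.
    exists z. split; [lra|auto].
  - destruct (IVT_open (fun y => eO a c r (S m') y) u x) as [z [Hz1 Hz2]].
    apply reval_cont. lra.
    apply (sgn_opp (S m')). apply HsO. rewrite E2. simpl.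
    replace (-1 * (-1) ^ m' * (c * c ^ m' * (-1) ^ m' * x)) with (- (c * c^m') * x * ((-1) ^ m' * (-1) ^ m')) by ring.
    rewrite Hsq. simpl in Hcm. assert (x < 0) by lra. nra.
    exists z. split; [lra|auto].
Qed.

Lemma neg_pow x n : (- x) ^ n = (-1)^n * x^n.
Proof. rewrite <- Rpow_mult_distr. f_equal. ring. Qed.

Lemma dominate al be q : be < 0 -> 0 < q < 1 -> exists N, forall n, (N <= n)%nat -> al * q^n + be < 0.
Proof.
  intros Hb Hq.
  destruct (pow_lt_1_zero q) with (y := - be / (Rabs al + 1)) as [N HN].
  rewrite Rabs_right; lra. apply Rdiv_lt_0_compat. lra. pose proof (Rabs_pos al); lra.
  exists N. intros n Hn. specialize (HN n Hn).
  assert (Hqn : 0 < q^n) by (apply pow_lt; lra).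
  rewrite Rabs_right in HN by lra.
  assert (al * q^n <= Rabs al * q^n) by (apply Rmult_le_compat_r; [lra| apply Rle_abs]).
  assert (Rabs al * q^n < - be).
  { apply (Rmult_lt_reg_r (/ (Rabs al + 1))). apply Rinv_0_lt_compat; pose proof (Rabs_pos al); lra.
    assert (q^n < -be / (Rabs al + 1)) by exact HN.
    unfold Rdiv in H0. pose proof (Rabs_pos al).
    assert (Rabs al * / (Rabs al + 1) < 1). { apply (Rmult_lt_reg_r (Rabs al + 1)). lra. field_simplify; lra. }
    assert (0 < / (Rabs al + 1)) by (apply Rinv_0_lt_compat; lra).
    nra. }
  lra.
Qed.

Lemma near_g a c r u (ha : 0 < a) (hc : 0 < c) (hr : 0 < r) (hu0 : u < 0) (hur : u < r)
  (hg : u^2 = (u - r) * (a * u + c)) (hh : 0 < (2 - a) * u + a * r)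
  (hL : forall z, u < z <= 0 -> 0 < gq a c r z)
  (HsE : forall m, 0 < (-1)^m * eE a c r m u) (HsO : forall m, 0 < (-1)^(S m) * eO a c r m u) :
  forall eps, 0 < eps ->
  exists M, forall m, (M <= m)%nat ->
  (exists x, u < x < u + eps /\ eE a c r m x = 0) /\ (exists x, u < x < u + eps /\ eO a c r m x = 0).
Proof.
  intros eps Heps.
  assert (Hid : forall z, 4 * gq a c r z = ((2 - a) * z + a * r)^2 - (z - r) * (a^2 * (z - r) + 4 * c))
    by (intros; unfold gq; ring).
  assert (Hgu : gq a c r u = 0) by (unfold gq; nra).
  assert (He : a^2 * (u - r) + 4 * c < 0).
  { pose proof (Hid u) as H. rewrite Hgu in H. assert (0 < (u - r) * (a ^ 2 * (u - r) + 4 * c)) by nra. nra. }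
  set (del := Rmin eps (Rmin (- u) (- (a^2 * (u - r) + 4 * c) / a^2))).
  assert (Hdel : 0 < del).
  { unfold del. apply Rmin_glb_lt; auto. apply Rmin_glb_lt. lra. apply Rdiv_lt_0_compat; nra. }
  assert (Hd1 : del <= eps) by apply Rmin_l.
  assert (Hd2 : del <= - u) by (unfold del; eapply Rle_trans; [apply Rmin_r|apply Rmin_l]).
  assert (Hd3 : del <= - (a^2 * (u - r) + 4 * c) / a^2) by (unfold del; eapply Rle_trans; [apply Rmin_r|apply Rmin_r]).
  set (z0 := u + del / 2).
  set (t0 := z0 - r).
  assert (Ht0 : t0 < 0) by (unfold t0, z0; lra).
  assert (Hz0 : z0 < 0) by (unfold z0; lra).
  assert (Hz0e : a^2 * t0 + 4 * c < 0).
  { assert (del * a^2 <= - (a ^ 2 * (u - r) + 4 * c)).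
    { apply (Rmult_le_reg_r (/ a^2)). apply Rinv_0_lt_compat; nra.
      replace (del * a ^ 2 * / a ^ 2) with del by (field; lra). exact Hd3. }
    unfold t0, z0. nra. }
  set (D0 := t0 * (a^2 * t0 + 4 * c)).
  assert (HD0 : 0 < D0) by (unfold D0; nra).
  set (h0 := (2 - a) * z0 + a * r).
  assert (Hh0 : 0 < h0).
  { unfold h0. destruct (Rle_lt_dec a 2). unfold z0. nra. nra. }
  assert (Hg0 : 0 < gq a c r z0) by (apply hL; unfold z0; lra).
  pose proof (Hid z0) as Hid0. fold h0 in Hid0. replace (z0 - r) with t0 in Hid0 by reflexivity.
  replace (t0 * (a ^ 2 * t0 + 4 * c)) with D0 in Hid0 by reflexivity.
  set (sq := sqrt D0).
  assert (Hsq : sq * sq = D0) by (apply sqrt_sqrt; lra).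
  assert (Hsq0 : 0 < sq) by (apply sqrt_lt_R0; lra).
  assert (Hsqh : sq < h0) by nra.
  set (lp := (a * t0 + sq) / 2). set (lm := (a * t0 - sq) / 2).
  assert (Hlp : lp^2 = a * t0 * lp + c * t0) by (unfold lp; unfold D0 in Hsq; nra).
  assert (Hlm : lm^2 = a * t0 * lm + c * t0) by (unfold lm; unfold D0 in Hsq; nra).
  set (al := (z0 - lm) / sq). set (be := (lp - z0) / sq).
  assert (Hbe : be < 0).
  { assert (be * sq = lp - z0) by (unfold be; field; lra).
    assert (lp - z0 < 0) by (unfold lp, h0 in *; unfold t0 in *; lra). nra. }
  set (V := fun n => al * lp^n + be * lm^n).
  assert (V0 : V 0%nat = 1) by (unfold V, al, be, lp, lm; simpl; field; lra).
  assert (V1 : V 1%nat = z0) by (unfold V, al, be, lp, lm; simpl; field; lra).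
  assert (VS : forall n, V (S (S n)) = a * t0 * V (S n) + c * t0 * V n).
  { intros n. unfold V. simpl.
    replace (al * (lp * (lp * lp ^ n)) + be * (lm * (lm * lm ^ n))) with (al * (lp^2 * lp^n) + be * (lm^2 * lm^n)) by ring.
    rewrite Hlp, Hlm. ring. }
  assert (HV : forall m, eE a c r m z0 * t0^m = V (2 * m)%nat /\ eO a c r m z0 * t0^m = V (S (2 * m))).
  { induction m as [|m [IH1 IH2]].
    - rewrite eE_0, eO_0. simpl. rewrite V0, V1. split; ring.
    - assert (E1 : eE a c r (S m) z0 * t0^(S m) = V (2 * S m)%nat).
      { replace (2 * S m)%nat with (S (S (2 * m))) by lia. rewrite VS, <- IH1, <- IH2, eE_S. simpl. ring. }
      split; auto.
      replace (S (2 * S m)) with (S (S (S (2 * m)))) by lia. rewrite VS.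
      replace (S (S (2 * m))) with (2 * S m)%nat by lia. rewrite <- E1, <- IH2, eO_S.
      fold t0. simpl. ring. }
  assert (Hlp0 : lp < 0).
  { assert (sq < - a * t0). { assert (sq * sq < (a * t0)^2) by (rewrite Hsq; unfold D0; nra).
      assert (0 < - a * t0) by nra. nra. }
    unfold lp. lra. }
  assert (Hlmp : lm < lp) by (unfold lm, lp; lra).
  set (q := lp / lm).
  assert (Hqm : q * (- lm) = - lp) by (unfold q; field; lra).
  assert (Hq : 0 < q < 1) by (split; nra).
  destruct (dominate al be q Hbe Hq) as [N HN].
  assert (HP : forall n, (N <= n)%nat -> al * (-lp)^n + be * (-lm)^n < 0).
  { intros n Hn. rewrite <- Hqm. rewrite Rpow_mult_distr. assert (0 < (-lm)^n) by (apply pow_lt; lra).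
    specialize (HN n Hn).
    replace (al * (q ^ n * (- lm) ^ n) + be * (- lm) ^ n) with ((-lm)^n * (al * q^n + be)) by ring. nra. }
  assert (HVn : forall n, V n = (-1)^n * (al * (-lp)^n + be * (-lm)^n)).
  { intros n. unfold V. rewrite !neg_pow.
    replace ((-1) ^ n * (al * ((-1) ^ n * lp ^ n) + be * ((-1) ^ n * lm ^ n))) with
      (((-1)^n * (-1)^n) * (al * lp^n + be * lm^n)) by ring. rewrite sgn_sq. ring. }
  assert (Hev : forall m, (-1)^(2 * m) = 1).
  { intros m. rewrite pow_mult. replace ((-1)^2) with 1 by ring. apply pow1. }
  assert (Ht0m : forall m, t0^m = (-1)^m * (-t0)^m).
  { intros m. rewrite <- neg_pow. f_equal. ring. }
  exists N. intros m Hm.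
  assert (Hpt : 0 < (-t0)^m) by (apply pow_lt; lra).
  destruct (HV m) as [HE HO].
  split.
  - assert (HB : (-1)^m * eE a c r m z0 < 0).
    { assert (V (2 * m)%nat < 0). { rewrite HVn, Hev. specialize (HP (2 * m)%nat ltac:(lia)). lra. }
      rewrite <- HE, Ht0m in H. nra. }
    destruct (IVT_open (fun y => eE a c r m y) u z0) as [x [Hx1 Hx2]].
    apply reval_cont. unfold z0; lra.
    assert (Hs := sgn_sq m). specialize (HsE m). nra.
    exists x. split; [unfold z0 in Hx1; lra| auto].
  - assert (HB : 0 < (-1)^m * eO a c r m z0).
    { assert (0 < V (S (2 * m))). { rewrite HVn. change ((-1)^(S (2 * m))) with (-1 * (-1)^(2 * m)). rewrite Hev. specialize (HP (S (2 * m)) ltac:(lia)). lra. }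
      rewrite <- HO, Ht0m in H. nra. }
    destruct (IVT_open (fun y => eO a c r m y) u z0) as [x [Hx1 Hx2]].
    apply reval_cont. unfold z0; lra.
    apply (sgn_opp m). apply HsO. exact HB.
    exists x. split; [unfold z0 in Hx1; lra| auto].
Qed.

Lemma W_SS a b c d n z : W a b c d (S (S n)) z = Af a b z * W a b c d (S n) z + Bf c d z * W a b c d n z.
Proof. reflexivity. Qed.

Lemma W_EO a b c d r (eb : b = - a * r) (ed : d = - c * r) : forall m z,
  W a b c d (2 * m) z = (z - r)^m * eE a c r m z /\ W a b c d (S (2 * m)) z = (z - r)^m * eO a c r m z.
Proof.
  intros m z. induction m as [|m [IH1 IH2]].
  - simpl. rewrite eE_0, eO_0. split; ring.
  - assert (E1 : W a b c d (2 * S m) z = (z - r)^(S m) * eE a c r (S m) z).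
    { replace (2 * S m)%nat with (S (S (2 * m))) by lia. rewrite W_SS, IH1, IH2, eE_S.
      unfold Af, Bf. subst. simpl. ring. }
    split; auto.
    replace (S (2 * S m)) with (S (S (S (2 * m)))) by lia. rewrite W_SS.
    replace (S (S (2 * m))) with (2 * S m)%nat by lia. rewrite E1, IH2, eO_S.
    unfold Af, Bf. subst. simpl. ring.
Qed.

Definition Spec a b c d (n : nat) (p : list R) (z : nat -> R) : Prop :=
  let K := Nat.div2 (S n) in
  let r := - b / a in
  U_poly a b c d n p /\ has_degree p K /\
  (forall i j, (i < j < K)%nat -> z i < z j) /\
  (forall i, (i < K)%nat -> u a b c d < z i < r /\ reval p (z i) = 0) /\
  (forall w, ceval p w = C0 -> exists i, (i < K)%nat /\ w = mkC (z i) 0) /\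
  (forall m x, n = (2 * m)%nat -> eE a c r m x = 0 -> reval p x = 0) /\
  (forall m x, n = S (2 * m) -> eO a c r m x = 0 -> reval p x = 0).

Lemma Cdist_real x y : Cdist (mkC x 0) (mkC y 0) = Rabs (x - y).
Proof.
  unfold Cdist, Cmod. simpl re. simpl im. replace ((x - y) ^ 2 + (0 - 0) ^ 2) with (Rsqr (x - y)) by (unfold Rsqr; ring).
  apply sqrt_Rsqr_abs.
Qed.

Lemma setup a b c d (ha : 0 < a) (hc : 0 < c) (hb : b < 0) (hd : d < 0) (hAB : xA a b = xB c d) :
  let r := - b / a in
  0 < r /\ b = - a * r /\ d = - c * r /\ xB c d = r.
Proof.
  intros r. unfold xA, xB in hAB.
  assert (0 < r) by (unfold r; apply Rdiv_lt_0_compat; lra).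
  assert (b = - a * r) by (unfold r; field; lra).
  assert (d = - c * r). { unfold r. rewrite hAB. field. lra. }
  repeat split; auto; try (unfold xB; rewrite <- hAB; reflexivity).
Qed.

Lemma signs_all a b c d (ha : 0 < a) (hc : 0 < c) (hb : b < 0) (hd : d < 0) (hAB : xA a b = xB c d) :
  let r := - b / a in
  (forall m, 0 < (-1)^m * eE a c r m (u a b c d)) /\ (forall m, 0 < (-1)^(S m) * eO a c r m (u a b c d)).
Proof.
  intros r. destruct (setup a b c d ha hc hb hd hAB) as [hr [eb [ed _]]]. fold r in hr, eb, ed.
  destruct (u_cases a b c d r ha hc hr eb ed) as [hu0 [[E1 E2]|[E1 [E2 E3]]]].
  - apply signs_band; auto.
  - apply signs_g; auto. lra.
Qed.

Lemma spec_exists a b c d (ha : 0 < a) (hc : 0 < c) (hb : b < 0) (hd : d < 0) (hAB : xA a b = xB c d) :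
  forall n, exists pz : list R * (nat -> R), Spec a b c d n (fst pz) (snd pz).
Proof.
  intros n. destruct (setup a b c d ha hc hb hd hAB) as [hr [eb [ed _]]].
  set (r := - b / a) in *.
  destruct (signs_all a b c d ha hc hb hd hAB) as [HsE HsO]. fold r in HsE, HsO.
  destruct (u_cases a b c d r ha hc hr eb ed) as [hu0 _].
  pose proof (zeros_all a c r (u a b c d) ha hc hr hu0 HsE HsO) as HZ.
  assert (Ham : forall m, / a^m <> 0) by (intros; apply Rinv_neq_0_compat, pow_nonzero; lra).
  assert (HAf : forall z, Af a b z <> 0 -> Af a b z = a * (z - r) /\ z - r <> 0).
  { intros z Hz. unfold Af in *. rewrite eb in *. split. ring. intro H. apply Hz. 
    replace (a * z + - a * r) with (a * (z - r)) by ring. rewrite H. ring. }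
  destruct (Nat.Even_or_Odd n) as [[m Hm]|[m Hm]].
  - subst n. destruct (HZ m) as [zo [ze [Ho [He _]]]].
    exists (pscal (/ a^m) (Ef a c r m), ze). simpl fst. simpl snd.
    destruct (deg_EO a c r ha hc m) as [L1 [_ [N1 _]]].
    assert (Hroot : forall i, (i < m)%nat -> reval (pscal (/ a^m) (Ef a c r m)) (ze i) = 0).
    { intros i Hi. rewrite reval_pscal, (Zs_root _ _ _ _ _ _ He Hi). ring. }
    assert (Hdeg : has_degree (pscal (/ a^m) (Ef a c r m)) m).
    { apply has_degree_scal; auto. split; auto. lra. }
    unfold Spec. rewrite Nat.div2_succ_double. destruct He as [He1 [He2 He3]].
    split; [|split; [|split; [|split; [|split; [|split]]]]].
    + intros z Hz. destruct (HAf z Hz) as [E1 E2]. rewrite Nat.div2_double, E1.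
      destruct (W_EO a b c d r eb ed m z) as [W1 _]. rewrite W1, reval_pscal. unfold eE.
      rewrite Rpow_mult_distr. field. split; apply pow_nonzero; lra.
    + exact Hdeg.
    + exact He1.
    + intros i Hi. split; auto.
    + apply zeros_final; auto.
    + intros m' x Hm' Hx. assert (m' = m) by lia. subst m'. rewrite reval_pscal. fold r in Hx. unfold eE in Hx. rewrite Hx. ring.
    + intros m' x Hm'. lia.
  - replace n with (S (2 * m)) in * by lia. clear Hm.
    destruct (HZ m) as [zo [ze [Ho [He _]]]].
    exists (pscal (/ a^m) (Of a c r m), zo). simpl fst. simpl snd.
    destruct (deg_EO a c r ha hc m) as [_ [L2 [_ N2]]].
    assert (Hroot : forall i, (i < S m)%nat -> reval (pscal (/ a^m) (Of a c r m)) (zo i) = 0).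
    { intros i Hi. rewrite reval_pscal, (Zs_root _ _ _ _ _ _ Ho Hi). ring. }
    assert (Hdeg : has_degree (pscal (/ a^m) (Of a c r m)) (S m)).
    { apply has_degree_scal; auto. split; auto. lra. }
    assert (Hdv : Nat.div2 (S (S (2 * m))) = S m) by (change (Nat.div2 (S (S (2 * m)))) with (S (Nat.div2 (2 * m))); rewrite Nat.div2_double; reflexivity).
    unfold Spec. rewrite Hdv. destruct Ho as [Ho1 [Ho2 Ho3]].
    split; [|split; [|split; [|split; [|split; [|split]]]]].
    + intros z Hz. destruct (HAf z Hz) as [E1 E2]. rewrite Nat.div2_succ_double, E1.
      destruct (W_EO a b c d r eb ed m z) as [_ W2]. rewrite W2, reval_pscal. unfold eO.
      rewrite Rpow_mult_distr. field. split; apply pow_nonzero; lra.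
    + exact Hdeg.
    + exact Ho1.
    + intros i Hi. split; auto.
    + apply zeros_final; auto.
    + intros m' x Hm'. lia.
    + intros m' x Hm' Hx. assert (m' = m) by lia. subst m'. rewrite reval_pscal. fold r in Hx. unfold eO in Hx. rewrite Hx. ring.
Qed.

Theorem theorem3p6 (a b c d : R)
  (ha : 0 < a) (hc : 0 < c) (hb : b < 0) (hd : d < 0)
  (hAB : xA a b = xB c d) :
  (forall n : nat, exists p : list R,
      U_poly a b c d n p /\
      has_degree p (Nat.div2 (S n)) /\
      (forall z : Cx, ceval p z = C0 ->
         im z = 0 /\ u a b c d < re z /\ re z < xB c d)) /\
  limit_of_zeros a b c d (u a b c d) /\
  limit_of_zeros a b c d (xB c d).
Proof.
  destruct (setup a b c d ha hc hb hd hAB) as [hr [eb [ed hxB]]].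
  set (r := - b / a) in *.
  pose proof (spec_exists a b c d ha hc hb hd hAB) as HS.
  set (sel := fun n => proj1_sig (constructive_indefinite_description _ (HS n))).
  assert (Hsel : forall n, Spec a b c d n (fst (sel n)) (snd (sel n))).
  { intros n. unfold sel. destruct (constructive_indefinite_description _ (HS n)) as [pz Hpz]. simpl. exact Hpz. }
  set (U := u a b c d) in *.
  assert (Hreal : forall (P : R -> Prop),
    (exists M, forall m, (M <= m)%nat -> (exists x, P x /\ eE a c r m x = 0) /\ (exists x, P x /\ eO a c r m x = 0)) ->
    exists M, forall n, (M <= n)%nat -> exists i, (i < Nat.div2 (S n))%nat /\ P (snd (sel n) i)).
  { intros P [M HM]. exists (2 * M)%nat. intros n Hn.
    destruct (Hsel n) as [_ [_ [_ [_ [Hc [Hle Hlo]]]]]].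
    assert (Hx : exists x, P x /\ reval (fst (sel n)) x = 0).
    { destruct (Nat.Even_or_Odd n) as [[m Hm]|[m Hm]].
      - destruct (HM m ltac:(lia)) as [[x [Px Hx]] _]. exists x. split; auto. apply (Hle m); auto.
      - destruct (HM m ltac:(lia)) as [_ [x [Px Hx]]]. exists x. split; auto. apply (Hlo m); auto. lia. }
    destruct Hx as [x [Px Hx]].
    destruct (Hc (mkC x 0)) as [i [Hi Hxi]]. rewrite ceval_real, Hx. reflexivity.
    exists i. split; auto. injection Hxi as E. rewrite <- E. auto. }
  assert (Hzero : forall n i, (i < Nat.div2 (S n))%nat -> zero_of_U a b c d n (mkC (snd (sel n) i) 0)).
  { intros n i Hi. destruct (Hsel n) as [H1 [_ [_ [H4 _]]]]. exists (fst (sel n)). split; auto.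
    rewrite ceval_real. destruct (H4 i Hi) as [_ H]. rewrite H. reflexivity. }
  assert (HK : forall n, (1 <= n)%nat -> (0 < Nat.div2 (S n))%nat).
  { intros n Hn. destruct n. lia. change (Nat.div2 (S (S n))) with (S (Nat.div2 n)). apply Nat.lt_0_succ. }
  split; [|split].
  - intros n. destruct (Hsel n) as [H1 [H2 [_ [H4 [H5 _]]]]].
    exists (fst (sel n)). split; auto. split; auto.
    intros w Hw. destruct (H5 w Hw) as [i [Hi ->]]. simpl. rewrite hxB. destruct (H4 i Hi) as [[A B] _].
    split; auto.
  - exists 1%nat, (fun n => mkC (snd (sel n) 0%nat) 0). split.
    + intros n Hn. apply Hzero. apply HK; auto.
    + intros eps Heps.
      assert (Hnear : exists M, forall m, (M <= m)%nat ->
               (exists x, U < x < U + eps /\ eE a c r m x = 0) /\ (exists x, U < x < U + eps /\ eO a c r m x = 0)).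
      { destruct (signs_all a b c d ha hc hb hd hAB) as [HsE HsO]. fold r U in HsE, HsO.
        destruct (u_cases a b c d r ha hc hr eb ed) as [hu0 [[E1 E2]|[E1 [E2 E3]]]].
        - apply (near_e a c r U ha hc hr hu0 E1 HsE HsO eps Heps).
        - apply (near_g a c r U ha hc hr hu0 ltac:(unfold U; lra) E1 E2 E3 HsE HsO eps Heps). }
      destruct (Hreal _ Hnear) as [M HM]. exists (Nat.max M 1). intros n Hn.
      destruct (HM n ltac:(lia)) as [i [Hi [P1 P2]]].
      destruct (Hsel n) as [_ [_ [Hinc [H4 _]]]].
      assert (H0 : (0 < Nat.div2 (S n))%nat) by (apply HK; lia).
      destruct (H4 0%nat H0) as [[A _] _].
      assert (snd (sel n) 0%nat <= snd (sel n) i).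
      { destruct i. lra. left. apply Hinc. lia. }
      rewrite Cdist_real. unfold U, r in *. apply Rabs_def1; lra.
  - rewrite hxB.
    exists 1%nat, (fun n => mkC (snd (sel n) (pred (Nat.div2 (S n)))) 0). split.
    + intros n Hn. apply Hzero. pose proof (HK n Hn). lia.
    + intros eps Heps.
      assert (Hnear : exists M, forall m, (M <= m)%nat ->
               (exists x, r - eps < x < r /\ eE a c r m x = 0) /\ (exists x, r - eps < x < r /\ eO a c r m x = 0))
        by (apply near_r; auto).
      destruct (Hreal _ Hnear) as [M HM]. exists (Nat.max M 1). intros n Hn.
      destruct (HM n ltac:(lia)) as [i [Hi [P1 P2]]].
      destruct (Hsel n) as [_ [_ [Hinc [H4 _]]]].
      assert (H0 : (0 < Nat.div2 (S n))%nat) by (apply HK; lia).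
      destruct (H4 (pred (Nat.div2 (S n))) ltac:(lia)) as [[_ A] _].
      assert (snd (sel n) i <= snd (sel n) (pred (Nat.div2 (S n)))).
      { destruct (Nat.eq_dec i (pred (Nat.div2 (S n)))) as [->|Hne]. lra. left. apply Hinc. lia. }
      rewrite Cdist_real. unfold U, r in *. apply Rabs_def1; lra.
Qed.
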